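(* Let $p\colon X\to B$ be a Boolean set. Let $X^{\ast}$ be the set of ultrafilters of $(X,\le)$, topologized by the basis of sets $L(a)=\{G\in X^{\ast}: a\in G\}$, $a\in X$, and let $B^{\ast}$ be the set of ultrafilters of $B$ with the Stone topology (basis $M(b)=\{F\in B^{\ast}: b\in F\}$, $b\in B$). Let $\widetilde p\colon X^{\ast}\to B^{\ast}$ be $G\mapsto p(G)$ (which is an ultrafilter of $B$). Then $\widetilde p\colon X^{\ast}\to B^{\ast}$ is an étalé space, i.e. $\widetilde p$ is a surjective local homeomorphism (and $B^{\ast}$ is a Boolean space).
   Context: Convention: a ''Boolean algebra'' means a generalized Boolean algebra (relatively complemented distributive lattice with $0$). Presheaf of sets over a meet semilattice $E$: pairwise disjoint sets $X_e$, restriction maps $x\mapsto x|^e_f$ for $e\ge f$ with $|^e_e=\mathrm{id}$ and $(x|^e_f)|^f_g=x|^e_g$; $p(x)=e$ iff $x\in X_e$; global support: all $X_e\neq\emptyset$. Order: $x\le y$ iff $p(x)\le p(y)$ and $x=y|^{p(y)}_{p(x)}$. Compatibility $x\sim y$: $x\wedge y$ exists and $p(x\wedge y)=p(x)\wedge p(y)$. A Boolean set is a presheaf $p\colon X\to B$ with global support over a Boolean algebra $B$ such that $(X,\le)$ has least element $0$, compatible pairs have joins, and $p(x)=0\Rightarrow x=0$. Filter: non-empty, down directed, upwardly closed subset; ultrafilter: maximal proper filter. An étalé space is a triple $(E,p,Y)$ with $p\colon E\to Y$ a surjective local homeomorphism; a Boolean space is a Hausdorff space with a basis of compact-open sets.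 *)

(* Defs.v *)
(* B is a generalized Boolean algebra, i.e. a
   sectionally complemented distributive lattice with bottom
   (mathcomp's cbDistrLatticeType). Sets are predicates T -> Prop. *)
From HB Require Import structures.
From Stdlib Require List.
From mathcomp Require Import all_boot all_order.
Set Implicit Arguments. Unset Strict Implicit. Unset Printing Implicit Defensive.
Import Order.TTheory.
Local Open Scope order_scope.

Definition leB {d} {B : cbDistrLatticeType d} (a b : B) : Prop := (a <= b)%O.

(* X is the disjoint union of the X_e; p x = e iff x \in X_e.
   res x f is the restriction x|^{p x}_f, meaningful for f <= p x. *)
Definition presheaf {d} {B : cbDistrLatticeType d} {X : Type}
    (p : X -> B) (res : X -> B -> X) : Prop :=
  (forall x f, f <= p x -> p (res x f) = f) /\
  (forall x, res x (p x) = x) /\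
  (forall x f g, g <= f -> f <= p x -> res (res x f) g = res x g).

Definition global_support {d} {B : cbDistrLatticeType d} {X : Type}
    (p : X -> B) : Prop := forall e : B, exists x : X, p x = e.

Definition leX {d} {B : cbDistrLatticeType d} {X : Type}
    (p : X -> B) (res : X -> B -> X) (x y : X) : Prop :=
  p x <= p y /\ x = res y (p x).

Definition is_meet {T} (le : T -> T -> Prop) (m x y : T) : Prop :=
  le m x /\ le m y /\ (forall z, le z x -> le z y -> le z m).
Definition is_join {T} (le : T -> T -> Prop) (j x y : T) : Prop :=
  le x j /\ le y j /\ (forall z, le x z -> le y z -> le j z).
Definition is_least {T} (le : T -> T -> Prop) (z : T) : Prop :=
  forall x, le z x.

Definition compatible {d} {B : cbDistrLatticeType d} {X : Type}
    (p : X -> B) (res : X -> B -> X) (x y : X) : Prop :=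
  exists m, is_meet (leX p res) m x y /\ p m = p x `&` p y.

Definition boolean_set {d} {B : cbDistrLatticeType d} {X : Type}
    (p : X -> B) (res : X -> B -> X) : Prop :=
  presheaf p res /\ global_support p /\
  (exists z, is_least (leX p res) z) /\
  (forall x y, compatible p res x y -> exists j, is_join (leX p res) j x y) /\
  (forall x, p x = \bot -> is_least (leX p res) x).

Definition filter {T} (le : T -> T -> Prop) (F : T -> Prop) : Prop :=
  (exists x, F x) /\
  (forall x y, F x -> F y -> exists z, F z /\ le z x /\ le z y) /\
  (forall x y, F x -> le x y -> F y).
Definition proper_filter {T} (le : T -> T -> Prop) (F : T -> Prop) : Prop :=
  filter le F /\ exists x, ~ F x.
Definition ultrafilter {T} (le : T -> T -> Prop) (F : T -> Prop) : Prop :=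
  proper_filter le F /\
  forall F', proper_filter le F' -> (forall x, F x -> F' x) ->
             forall x, F' x -> F x.

Definition basic_ultra {T} (le : T -> T -> Prop) (a : T) (G : T -> Prop) : Prop :=
  ultrafilter le G /\ G a.
Definition ultra_open {T} (le : T -> T -> Prop) (U : (T -> Prop) -> Prop) : Prop :=
  forall G, U G -> ultrafilter le G /\
    exists a, G a /\ forall H, basic_ultra le a H -> U H.

Definition ptilde {d} {B : cbDistrLatticeType d} {X : Type}
    (p : X -> B) (G : X -> Prop) : B -> Prop :=
  fun b => exists x, G x /\ p x = b.

Definition img {T1 T2} (f : T1 -> T2) (U : T1 -> Prop) : T2 -> Prop :=
  fun y => exists x, U x /\ f x = y.

Definition surjective_on {T1 T2} (S1 : T1 -> Prop) (S2 : T2 -> Prop)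
    (f : T1 -> T2) : Prop :=
  forall y, S2 y -> exists x, S1 x /\ f x = y.

(* f : S1 -> S2 is a local homeomorphism: every point has an open
   neighbourhood U with f(U) open and f|U : U -> f(U) a homeomorphism
   (subspace topologies; since U, f(U) are open, the open subsets of
   the subspaces are the open sets contained in them). *)
Definition local_homeo {T1 T2} (S1 : T1 -> Prop) (O1 : (T1 -> Prop) -> Prop)
    (S2 : T2 -> Prop) (O2 : (T2 -> Prop) -> Prop) (f : T1 -> T2) : Prop :=
  (forall x, S1 x -> S2 (f x)) /\
  forall x, S1 x -> exists U,
    O1 U /\ U x /\ O2 (img f U) /\
    (forall y z, U y -> U z -> f y = f z -> y = z) /\
    (forall W, (forall y, W y -> U y) -> (O1 W <-> O2 (img f W))).

Definition etale {T1 T2} (S1 : T1 -> Prop) (O1 : (T1 -> Prop) -> Prop)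
    (S2 : T2 -> Prop) (O2 : (T2 -> Prop) -> Prop) (f : T1 -> T2) : Prop :=
  surjective_on S1 S2 f /\ local_homeo S1 O1 S2 O2 f.

Definition hausdorff {T} (S : T -> Prop) (O : (T -> Prop) -> Prop) : Prop :=
  forall x y, S x -> S y -> x <> y ->
    exists U V, O U /\ O V /\ U x /\ V y /\ (forall z, U z -> V z -> False).

Definition compact_in {T} (O : (T -> Prop) -> Prop) (K : T -> Prop) : Prop :=
  forall (I : Type) (C : I -> T -> Prop), (forall i, O (C i)) ->
    (forall x, K x -> exists i, C i x) ->
    exists s : list I, forall x, K x -> exists i, List.In i s /\ C i x.

Definition boolean_space {T} (S : T -> Prop) (O : (T -> Prop) -> Prop) : Prop :=
  hausdorff S O /\
  forall U x, O U -> U x ->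
    exists V, O V /\ compact_in O V /\ V x /\ (forall y, V y -> U y).

(* Main.v *)
Require Import Defs.
From mathcomp Require Import all_boot all_order.
From mathcomp Require classical_sets.
From Stdlib Require Import Classical FunctionalExtensionality PropExtensionality.
Set Implicit Arguments. Unset Strict Implicit. Unset Printing Implicit Defensive.
Import Order.Theory.
Local Open Scope order_scope.

Section Generic.
Variables (T : Type) (le : T -> T -> Prop).

Lemma filter_up (F : T -> Prop) x y : Defs.filter le F -> F x -> le x y -> F y.
Proof. by move=> [_ [_ H]]; apply: H. Qed.

Lemma basic_open a : ultra_open le (basic_ultra le a).
Proof. move=> G [UG Ga]; split=> //; by exists a. Qed.

Lemma not_proper_all (F : T -> Prop) : ~ (exists x, ~ F x) -> forall x, F x.
Proof. move=> H x; apply: NNPP => Hx; apply: H; by exists x. Qed.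

Lemma set_ext (F G : T -> Prop) : (forall x, F x -> G x) -> (forall x, G x -> F x) -> F = G.
Proof.
move=> H1 H2; apply: functional_extensionality => x.
apply: propositional_extensionality; split; [exact: H1|exact: H2].
Qed.

End Generic.

Section BSide.
Variables (d : Order.disp_t) (B : cbDistrLatticeType d).
Local Notation leb := (@leB d B).

Lemma pf_nobot (F : B -> Prop) : proper_filter leb F -> ~ F \bot.
Proof.
move=> [Ff [y Hy]] Fb; apply: Hy; apply: (filter_up Ff Fb); exact: le0x.
Qed.

Lemma f_meet (F : B -> Prop) x y : Defs.filter leb F -> F x -> F y -> F (x `&` y).
Proof.
move=> Ff Fx Fy; have [_ [Hd _]] := Ff; have [z [Fz [zx zy]]] := Hd _ _ Fx Fy.
apply: (filter_up Ff Fz); rewrite /leB lexI; by apply/andP.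
Qed.

Lemma prime_ultra (F : B -> Prop) c b : ultrafilter leb F -> F c -> F b \/ F (c `\` b).
Proof.
move=> [[Ff Fp] Fmax] Fc.
pose F' := fun t => exists f, F f /\ (f `\` b <= t).
have F'f : Defs.filter leb F'.
  split; first by exists c; exists c; split=> //; exact: leBx.
  split.
    move=> x y [f1 [F1 h1]] [f2 [F2 h2]].
    have [_ [Hd _]] := Ff; have [f3 [F3 [h31 h32]]] := Hd _ _ F1 F2.
    exists (f3 `\` b); split; first by exists f3.
    split; rewrite /leB.
      by apply: le_trans h1; apply: leBl.
    by apply: le_trans h2; apply: leBl.
  move=> x y [f [Ff0 h]] xy; exists f; split=> //; exact: (le_trans h xy).
have sub : forall x, F x -> F' x by move=> x Fx; exists x; split=> //; exact: leBx.
case: (classic (exists x, ~ F' x)) => [Hp|Hn].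
  right; apply: (Fmax F') => //; by exists c.
left; have [f [Ff0 hf]] := not_proper_all Hn \bot.
apply: (filter_up Ff Ff0); rewrite /leB -diff_eq0.
by rewrite eq_le hf le0x.
Qed.

End BSide.

Section XSide.
Variables (d : Order.disp_t) (B : cbDistrLatticeType d) (X : Type) (p : X -> B) (res : X -> B -> X).
Hypothesis HB : boolean_set p res.
Local Notation leb := (@leB d B).
Local Notation le := (leX p res).

Lemma p_res x f : f <= p x -> p (res x f) = f.
Proof. by have [[H _] _] := HB; apply: H. Qed.
Lemma res_p x : res x (p x) = x.
Proof. by have [[_ [H _]] _] := HB; apply: H. Qed.
Lemma res_res x f g : g <= f -> f <= p x -> res (res x f) g = res x g.
Proof. by have [[_ [_ H]] _] := HB; apply: H. Qed.

Lemma leX_refl x : le x x.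
Proof. by split=> //; rewrite res_p. Qed.

Lemma leX_trans x y z : le x y -> le y z -> le x z.
Proof.
move=> [h1 e1] [h2 e2]; split; first exact: le_trans h2.
by rewrite {1}e1 {1}e2 res_res.
Qed.

Lemma leX_p x y : le x y -> p x <= p y.
Proof. by case. Qed.

Lemma res_le k g f f' : le k g -> f <= p k -> f <= f' -> f' <= p g ->
  le (res k f) (res g f').
Proof.
move=> [hk ek] fk ff' f'g; split; first by rewrite !p_res.
rewrite p_res // ek res_res //.
by rewrite res_res // -ek.
Qed.

Lemma le_res x f : f <= p x -> le (res x f) x.
Proof. by move=> h; split; rewrite p_res. Qed.

Lemma bot_least x : p x = \bot -> is_least le x.
Proof. by have [_ [_ [_ [_ H]]]] := HB; apply: H. Qed.

Lemma zero_ex : exists z, is_least le z /\ p z = \bot.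
Proof.
have [_ [Hg _]] := HB; have [z hz] := Hg \bot; exists z; split=> //; exact: bot_least.
Qed.

Lemma le_bot x z : le x z -> p z = \bot -> p x = \bot.
Proof. move=> /leX_p h hz; apply/eqP; rewrite eq_le le0x andbT -hz //. Qed.

Lemma pf_nobotX (G : X -> Prop) x : proper_filter le G -> G x -> p x <> \bot.
Proof.
move=> [Gf [y Hy]] Gx hx; apply: Hy; apply: (filter_up Gf Gx); exact: bot_least.
Qed.

Lemma extend x b : p x <= b -> exists j, le x j /\ p j = b.
Proof.
move=> hxb.
have [_ [Hg [_ [Hj _]]]] := HB.
have [y hy] := Hg (b `\` p x).
have [z0 [z0l z0b]] := zero_ex.
have Hc : compatible p res x y.
  exists z0; split; last by rewrite z0b hy meetC diffIK.
  split; first exact: z0l. split; first exact: z0l.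
  move=> w wx wy; apply: bot_least; apply/eqP; rewrite eq_le le0x andbT.
  rewrite -(diffIK b (p x)) meetC lexI -hy.
  by rewrite (leX_p wx) (leX_p wy).
have [j [xj [yj jmin]]] := Hj _ _ Hc.
have bj : b <= p j.
  rewrite -(joinIB (p x) b) leUx; apply/andP; split.
    exact: le_trans (leIr _ _) (leX_p xj).
  by rewrite -hy; exact: leX_p yj.
have xj' : le x (res j b).
  split; first by rewrite p_res.
  by rewrite res_res //; exact: (proj2 xj).
have yj' : le y (res j b).
  split; first by rewrite p_res // hy leBx.
  rewrite res_res; [exact: (proj2 yj)| |by []]; rewrite hy; exact: leBx.
have := leX_p (jmin _ xj' yj'); rewrite p_res // => jb.
exists j; split=> //; apply/eqP; by rewrite eq_le jb bj.
Qed.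

Lemma image_pf (G : X -> Prop) : proper_filter le G -> proper_filter leb (ptilde p G).
Proof.
move=> [Gf Gp]; have Gf' := Gf; have [[x Gx] [Gd Gu]] := Gf'.
split; last first.
  exists \bot => [[y [Gy hy]]]; exact: (pf_nobotX (conj Gf Gp) Gy hy).
split; first by exists (p x); exists x.
split.
  move=> b1 b2 [x1 [G1 <-]] [x2 [G2 <-]].
  have [z [Gz [z1 z2]]] := Gd _ _ G1 G2.
  exists (p z); split; first by exists z.
  by split; apply: leX_p.
move=> b1 b2 [x1 [G1 <-]] hb.
have [j [xj pj]] := extend hb.
exists j; split=> //; exact: Gu xj.
Qed.

Lemma ultra_image (G : X -> Prop) : ultrafilter le G -> ultrafilter leb (ptilde p G).
Proof.
move=> [Gpf Gmax]; split; first exact: image_pf.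
have Gpf' := Gpf; have [Gf _] := Gpf'; have Gf' := Gf; have [[x Gx] [Gd Gu]] := Gf'.
move=> F' [F'f F'p] sub b F'b.
pose F1 := fun y => exists g, G g /\ le g x /\ le (res g (p g `&` b)) y.
have F1f : Defs.filter le F1.
  split; first by exists x; exists x; do 2!(split=> //); [exact: leX_refl|exact: le_res (leIl _ _)].
  split.
    move=> y1 y2 [g1 [G1 [g1x h1]]] [g2 [G2 [g2x h2]]].
    have [k [Gk [k1 k2]]] := Gd _ _ G1 G2.
    exists (res k (p k `&` b)); split.
      exists k; split=> //; split; first exact: leX_trans g1x.
      exact: leX_refl.
    split.
      apply: leX_trans h1; apply: res_le => //; first exact: leIl.
        by apply: leI2 => //; exact: leX_p.
      exact: leIl.
    apply: leX_trans h2; apply: res_le => //; first exact: leIl.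
      by apply: leI2 => //; exact: leX_p.
    exact: leIl.
  move=> y z [g [Gg [gx h]]] yz; exists g; do 2!(split=> //); exact: leX_trans yz.
have GF1 : forall g, G g -> F1 g.
  move=> g Gg; have [k [Gk [kg kx]]] := Gd _ _ Gg Gx.
  exists k; do 2!(split=> //); apply: leX_trans kg; exact: le_res (leIl _ _).
case: (classic (exists y, ~ F1 y)) => [Hp|Hn].
  have Gr : G (res x (p x `&` b)).
    apply: (Gmax F1) => //; exists x; split=> //; split; exact: leX_refl.
  have [_ [_ Hu]] := (proj1 (image_pf Gpf)).
  apply: (Hu (p x `&` b)); first by exists (res x (p x `&` b)); rewrite p_res // leIl.
  exact: leIr.
have [z0 [_ z0b]] := zero_ex.
have [g [Gg [_ hg]]] := not_proper_all Hn z0.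
have e0 := le_bot hg z0b; rewrite p_res ?leIl // in e0.
exfalso; have : ptilde p G (p g) by exists g.
move=> /sub F'g.
have [_ [Fd _]] := F'f; have [w [F'w [w1 w2]]] := Fd _ _ F'g F'b.
have : F' \bot.
  apply: (filter_up F'f F'w); rewrite /leB -e0 lexI; by apply/andP.
exact: (pf_nobot (conj F'f F'p)).
Qed.


Lemma lift (F : B -> Prop) a : ultrafilter leb F -> F (p a) ->
  exists G, ultrafilter le G /\ G a /\ ptilde p G = F.
Proof.
move=> Fu Fa; have [[Ff Fp] Fmax] := Fu; have Ff' := Ff; have [_ [Fd Fu']] := Ff'.
pose G := fun y => exists f, F f /\ f <= p a /\ le (res a f) y.
have Gf : Defs.filter le G.
  split; first by exists a; exists (p a); split=> //; split=> //; rewrite res_p; exact: leX_refl.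
  split.
    move=> y1 y2 [f1 [F1 [f1a h1]]] [f2 [F2 [f2a h2]]].
    have [f3 [F3 [h31 h32]]] := Fd _ _ F1 F2.
    have f3a : f3 <= p a by exact: le_trans f1a.
    exists (res a f3); split; first by exists f3; split=> //; split=> //; exact: leX_refl.
    split.
      by apply: leX_trans h1; apply: res_le => //; exact: leX_refl.
    by apply: leX_trans h2; apply: res_le => //; exact: leX_refl.
  move=> y z [f [Ff0 [fa h]]] yz; exists f; do 2!(split=> //); exact: leX_trans yz.
have [z0 [_ z0b]] := zero_ex.
have Gp : proper_filter le G.
  split=> //; exists z0 => [[f [Ff0 [fa h]]]].
  have := le_bot h z0b; rewrite p_res // => e; rewrite e in Ff0.
  exact: (pf_nobot (conj Ff Fp)).
have Fsub : forall G', proper_filter le G' -> (forall y, G y -> G' y) ->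
    forall f, F f -> ptilde p G' f.
  move=> G' G'p GG' f Ff0.
  have [f3 [F3 [h31 h32]]] := Fd _ _ Ff0 Fa.
  have Gf3 : G' (res a f3).
    apply: GG'; exists f3; split=> //; split=> //; exact: leX_refl.
  have [_ [_ Hu]] := proj1 (image_pf G'p).
  apply: (Hu f3) => //; exists (res a f3); split=> //; exact: p_res.
have Gu : ultrafilter le G.
  split=> // G' G'p GG' y G'y.
  have [G'f _] := G'p; have [_ [G'd _]] := G'f.
  have G'a : G' a by apply: GG'; exists (p a); split=> //; split=> //; rewrite res_p; exact: leX_refl.
  have [w [G'w [wa wy]]] := G'd _ _ G'a G'y.
  have Fw : F (p w).
    apply: (Fmax (ptilde p G')) => //; first exact: image_pf.
      exact: Fsub.
    by exists w.
  apply: (filter_up Gf _ wy); exists (p w); split=> //; split; first exact: leX_p.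
  rewrite -(proj2 wa); exact: leX_refl.
exists G; split=> //; split.
  exists (p a); split=> //; split=> //; rewrite res_p; exact: leX_refl.
apply: set_ext; last exact: Fsub.
move=> f Gf0; apply: (Fmax (ptilde p G)) => //; first exact: image_pf.
exact: Fsub.
Qed.

Lemma inj_sub (H1 H2 : X -> Prop) a : Defs.filter le H1 -> Defs.filter le H2 -> H1 a -> H2 a ->
  (forall b, ptilde p H1 b -> ptilde p H2 b) -> forall y, H1 y -> H2 y.
Proof.
move=> H1f H2f H1a H2a sub y H1y.
have [_ [H1d _]] := H1f; have [_ [H2d _]] := H2f.
have [w [H1w [wa wy]]] := H1d _ _ H1a H1y.
have [v [H2v pv]] : ptilde p H2 (p w) by apply: sub; exists w.
have [v' [H2v' [v'v v'a]]] := H2d _ _ H2v H2a.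
apply: (filter_up H2f H2v'); apply: leX_trans wy.
have hv : p v' <= p w by rewrite -pv; exact: leX_p.
split=> //.
rewrite (proj2 wa) res_res //; first exact: (proj2 v'a).
exact: leX_p.
Qed.

Lemma inj_ultra (H1 H2 : X -> Prop) a : ultrafilter le H1 -> ultrafilter le H2 -> H1 a -> H2 a ->
  ptilde p H1 = ptilde p H2 -> H1 = H2.
Proof.
move=> [[H1f _] _] [[H2f _] _] H1a H2a e.
apply: set_ext.
  apply: (inj_sub H1f H2f H1a H2a); by rewrite e.
apply: (inj_sub H2f H1f H2a H1a); by rewrite e.
Qed.

End XSide.

Lemma etale_part d (B : cbDistrLatticeType d) X (p : X -> B) res (HB : boolean_set p res) :
  etale (ultrafilter (leX p res)) (ultra_open (leX p res))
        (ultrafilter (@leB d B)) (ultra_open (@leB d B)) (ptilde p).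
Proof.
split.
  move=> F Fu; have [[[[f Ff] _] _] _] := Fu.
  have [_ [Hg _]] := HB; have [a pa] := Hg f.
  rewrite -pa in Ff; have [G [Gu [_ e]]] := lift HB Fu Ff.
  by exists G.
split; first by move=> G0 G0u; exact: (ultra_image HB G0u).
move=> G Gu; have [[[[a Ga] _] _] _] := Gu.
exists (basic_ultra (leX p res) a); split; first exact: basic_open.
split; first by split.
split.
  move=> F [H [[Hu Ha] <-]]; split; first exact: (ultra_image HB Hu).
  exists (p a); split; first by exists a.
  move=> F' [F'u F'a]; have [G' [G'u [G'a e]]] := lift HB F'u F'a.
  by exists G'.
split.
  move=> y z [yu ya] [zu za] e; exact: (inj_ultra HB yu zu ya za e).
move=> W WU; split.
  move=> Wo F [H [WH <-]]; have [Hu [c [Hc cW]]] := Wo H WH.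
  split; first exact: (ultra_image HB Hu).
  exists (p c); split; first by exists c.
  move=> F' [F'u F'c]; have [G' [G'u [G'c e]]] := lift HB F'u F'c.
  exists G'; split=> //; apply: cW; by split.
move=> Io H WH; have [Hu Ha] := WU H WH; split=> //.
have [_ [b [[c [Hc pc]] Mb]]] := Io (ptilde p H) (ex_intro _ H (conj WH erefl)).
have [[Hf _] _] := Hu; have [_ [Hd _]] := Hf.
have [c' [Hc' [c'c c'a]]] := Hd _ _ Hc Ha.
exists c'; split=> // H' [H'u H'c'].
have [[H'f _] _] := H'u.
have H'a := filter_up H'f H'c' c'a.
have H'c := filter_up H'f H'c' c'c.
have [H'' [WH'' e]] : img (ptilde p) W (ptilde p H').
  apply: Mb; split; first exact: (ultra_image HB H'u).
  by exists c; rewrite pc.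
have [H''u H''a] := WU _ WH''.
by rewrite -(inj_ultra HB H''u H'u H''a H'a e).
Qed.

Section BSpace.
Variables (d : Order.disp_t) (B : cbDistrLatticeType d).
Local Notation leb := (@leB d B).

Lemma gen_filter (A : B -> Prop) (h : B -> B) :
  Defs.filter leb A -> (forall x x', x <= x' -> h x <= h x') -> (forall x, h x <= x) ->
  Defs.filter leb (fun t => exists f, A f /\ h f <= t) /\
  (forall x, A x -> exists f, A f /\ h f <= x).
Proof.
move=> Af hm hl; have [[a Aa] [Ad _]] := Af; split; last first.
  by move=> x Ax; exists x; split.
split; first by exists (h a); exists a.
split.
  move=> x y [f1 [A1 h1]] [f2 [A2 h2]].
  have [f3 [A3 [h31 h32]]] := Ad _ _ A1 A2.
  exists (h f3); split; first by exists f3.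
  split; rewrite /leB; [apply: le_trans h1|apply: le_trans h2]; exact: hm.
move=> x y [f [Af0 hf]] xy; exists f; split=> //; exact: (le_trans hf xy).
Qed.

Lemma compact_basic b : compact_in (ultra_open leb) (basic_ultra leb b).
Proof.
move=> I C Co Ccov.
pose fc c := exists s : list I, forall F, ultrafilter leb F -> F c -> exists i, List.In i s /\ C i F.
suff [s hs] : fc b by exists s => F [Fu Fb]; exact: hs.
apply: NNPP => nfc.
have fc_mono : forall c c', c <= c' -> fc c' -> fc c.
  move=> c c' h [s hs]; exists s => F Fu Fc; apply: hs => //.
  exact: (filter_up (proj1 (proj1 Fu)) Fc h).
pose good Q := Defs.filter leb Q /\ Q b /\ forall c, Q c -> ~ fc c.
pose Pz := fun Q : B -> Prop => (forall x, ~ Q x) \/ good Q.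
have Pzg : forall Q x, Pz Q -> Q x -> good Q by move=> Q x [h|h] Qx; [case: (h x)|].
have upg : good (fun y => b <= y).
  split.
    split; first by exists b.
    split; first by move=> x y hx hy; exists b.
    by move=> x y hx hy; exact: le_trans hy.
  split=> // c hc fcc; apply: nfc; exact: fc_mono hc fcc.
have [A [PA Amax]] : exists A, Pz A /\ forall Q, classical_sets.proper A Q -> ~ Pz Q.
  apply: classical_sets.Zorn_bigcup.
  move=> Fam FamP Ftot.
  case: (classic (exists x Q, Fam Q /\ Q x)) => [[x0 [Q0 [FQ0 Qx0]]]|hn]; last first.
    left => x [Q FQ Qx]; apply: hn; by exists x, Q.
  right.
  have gm : forall Q y, Fam Q -> Q y -> good Q by move=> Q y FQ Qy; exact: Pzg (FamP _ FQ) Qy.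
  split.
    split; first by exists x0; exists Q0.
    split.
      move=> y1 y2 [Q1 FQ1 Q1y] [Q2 FQ2 Q2y].
      case: (Ftot _ _ FQ1 FQ2) => [s12|s21].
        have [[_ [Hd _]] _] := gm _ _ FQ2 Q2y.
        have [z [Qz zz]] := Hd _ _ (s12 _ Q1y) Q2y.
        by exists z; split=> //; exists Q2.
      have [[_ [Hd _]] _] := gm _ _ FQ1 Q1y.
      have [z [Qz zz]] := Hd _ _ Q1y (s21 _ Q2y).
      by exists z; split=> //; exists Q1.
    move=> y z [Q FQ Qy] yz; exists Q => //.
    have [Qf _] := gm _ _ FQ Qy; exact: filter_up Qf Qy yz.
  split; first by exists Q0 => //; have [_ [? _]] := gm _ _ FQ0 Qx0.
  move=> c [Q FQ Qc]; have [_ [_ ?]] := gm _ _ FQ Qc; by auto.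
have Ag : good A.
  case: PA => [h|//]; exfalso; apply: (Amax (fun y => b <= y)); last by right.
  split; first by move=> t At; case: (h t At).
  move=> s; apply: (h b); apply: s; exact: le_refl.
have Amx : forall Q, good Q -> (forall x, A x -> Q x) -> forall x, Q x -> A x.
  move=> Q gQ AQ x Qx; apply: NNPP => nAx; apply: (Amax Q); last by right.
  split; first exact: AQ.
  move=> s; apply: nAx; exact: s.
have [Af [Ab Anf]] := Ag.
have fcbot : fc \bot.
  by exists nil => F Fu Fb; exfalso; exact: (pf_nobot (proj1 Fu) Fb).
have Au : ultrafilter leb A.
  split; first by split=> //; exists \bot => Abot; exact: Anf _ Abot fcbot.
  move=> F' [F'f F'p] AF' y F'y; apply: NNPP => nAy.
  suff [g [Ag' gy]] : exists g, A g /\ g `&` y = \bot.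
    apply: (pf_nobot (conj F'f F'p)); rewrite -gy.
    exact: (f_meet F'f (AF' _ Ag') F'y).
  have [Acf subc] := gen_filter (h := fun f => f `&` y) Af
     (fun x x' h => leI2 h (le_refl y)) (fun x => leIl x y).
  have [Adf subd] := gen_filter (h := fun f => f `\` y) Af
     (fun x x' h => leBl y h) (fun x => leBx x y).
  set Ac := (fun t => _) in Acf subc.
  set Ad := (fun t => _) in Adf subd.
  case: (classic (good Ac)) => [gc|ngc].
    exfalso; apply: nAy; apply: (Amx Ac gc subc); exists b; split=> //; exact: leIr.
  have [f1 [Af1 fc1]] : exists f1, A f1 /\ fc (f1 `&` y).
    apply: NNPP => hn; apply: ngc; split=> //; split; first exact: subc.
    move=> c [f [Af0 hf]] fcc; apply: hn; exists f; split=> //; exact: fc_mono hf fcc.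
  case: (classic (good Ad)) => [gd|ngd].
    exists (b `\` y); split; last exact: diffIK.
    apply: (Amx Ad gd subd); exists b; split=> //; exact: le_refl.
  have [f2 [Af2 fc2]] : exists f2, A f2 /\ fc (f2 `\` y).
    apply: NNPP => hn; apply: ngd; split=> //; split; first exact: subd.
    move=> c [f [Af0 hf]] fcc; apply: hn; exists f; split=> //; exact: fc_mono hf fcc.
  exfalso; have [_ [Ad0 _]] := Af.
  have [f3 [Af3 [h31 h32]]] := Ad0 _ _ Af1 Af2.
  apply: (Anf f3 Af3).
  have [s1 hs1] := fc_mono (f3 `&` y) (f1 `&` y) (leI2 h31 (le_refl y)) fc1.
  have [s2 hs2] := fc_mono (f3 `\` y) (f2 `\` y) (leBl y h32) fc2.
  exists (s1 ++ s2) => H Hu Hf3.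
  case: (prime_ultra y Hu Hf3) => [Hy|Hd].
    have [i [ii Ci]] := hs1 H Hu (f_meet (proj1 (proj1 Hu)) Hf3 Hy).
    exists i; split=> //; apply: List.in_or_app; by left.
  have [i [ii Ci]] := hs2 H Hu Hd.
  exists i; split=> //; apply: List.in_or_app; by right.
have [i CiA] := Ccov A (conj Au Ab).
have [_ [a [Aa Ma]]] := Co i A CiA.
apply: (Anf a Aa); exists [:: i] => H Hu Ha; exists i; split; first by left.
apply: Ma; by split.
Qed.

End BSpace.

Lemma sep_lemma d (B : cbDistrLatticeType d) (F1 F2 : B -> Prop) b :
  ultrafilter (@leB d B) F1 -> ultrafilter (@leB d B) F2 -> F1 b -> ~ F2 b ->
  exists U V, ultra_open (@leB d B) U /\ ultra_open (@leB d B) V /\ U F1 /\ V F2 /\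
    (forall z, U z -> V z -> False).
Proof.
move=> F1u F2u F1b nF2b; have [[[[c F2c] _] _] _] := F2u.
case: (prime_ultra b F2u F2c) => [//|F2d].
exists (basic_ultra (@leB d B) b), (basic_ultra (@leB d B) (c `\` b)).
split; first exact: basic_open. split; first exact: basic_open.
split; first by split. split; first by split.
move=> z [zu zb] [_ zc]; have := f_meet (proj1 (proj1 zu)) zb zc.
rewrite meetC diffIK; exact: (pf_nobot (proj1 zu)).
Qed.

Lemma bspace d (B : cbDistrLatticeType d) :
  boolean_space (ultrafilter (@leB d B)) (ultra_open (@leB d B)).
Proof.
split.
  move=> F1 F2 F1u F2u ne.
  have [b hb] : exists b, ~ (F1 b <-> F2 b).
    apply: NNPP => hn; apply: ne; apply: set_ext => b hb.
      have : F1 b <-> F2 b by apply: NNPP => h; apply: hn; exists b.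
      by case=> + _; apply.
    have : F1 b <-> F2 b by apply: NNPP => h; apply: hn; exists b.
    by case=> _; apply.
  case: (classic (F1 b)) => F1b.
    apply: (sep_lemma F1u F2u F1b) => F2b; by apply: hb.
  have F2b : F2 b by apply: NNPP => nF2b; apply: hb; split.
  have [U [V [Uo [Vo [UF2 [VF1 dj]]]]]] := sep_lemma F2u F1u F2b F1b.
  exists V, U; do 4!(split=> //); move=> z Vz Uz; exact: dj Uz Vz.
move=> U F Uo UF; have [Fu [a [Fa Ma]]] := Uo F UF.
exists (basic_ultra (@leB d B) a); split; first exact: basic_open.
split; first exact: compact_basic.
by split.
Qed.

Theorem proposition3p9 (d : Order.disp_t) (B : cbDistrLatticeType d)
    (X : Type) (p : X -> B) (res : X -> B -> X) :
  boolean_set p res ->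
  (forall G, ultrafilter (leX p res) G -> ultrafilter (@leB d B) (ptilde p G)) /\
  etale (ultrafilter (leX p res)) (ultra_open (leX p res))
        (ultrafilter (@leB d B)) (ultra_open (@leB d B)) (ptilde p) /\
  boolean_space (ultrafilter (@leB d B)) (ultra_open (@leB d B)).
Proof.
move=> HB; split; first by move=> G Gu; exact: (ultra_image HB Gu).
split; first exact: etale_part.
exact: bspace.
Qed.
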